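(* Let $p$ be an odd prime and $\lambda$ a nonempty self-conjugate partition. If $a^*_\lambda$ is even, then $p\mid a^*_\lambda$.
   Context: Partitions: $\lambda=(\lambda_1\ge\lambda_2\ge\cdots)$ with finitely many nonzero parts; $l(\lambda)$ = number of nonzero parts; Young diagram $[\lambda]=\{(i,j): i\ge1, 1\le j\le\lambda_i\}$ ($i$ = row, increasing downward); self-conjugate means $(i,j)\in[\lambda]\iff(j,i)\in[\lambda]$. Rim and $p$-rim: the rim is the set of nodes $(i,j)\in[\lambda]$ with $(i+1,j+1)\notin[\lambda]$. Label rim nodes $1,2,\dots$ along the rim path from $(1,\lambda_1)$ to $(l(\lambda),1)$ (top-right to bottom-left). The first $p$-segment is the rim nodes labelled $1,\dots,p$ (or all if fewer). If the last node $(i,j)$ of a $p$-segment lies in the last row, stop; otherwise with $l$ the smallest label in row $i+1$ the next $p$-segment is the rim nodes labelled $l,\dots,l+p-1$ (or up to the last). The $p$-rim is the union of the $p$-segments. $p$-rim*: $U_\lambda=\{(i,j)\in p\text{-rim of }\lambda: i\le j\}$, $L_\lambda=\{(j,i):(i,j)\in U_\lambda\}$, $\mathrm{Rim}^*_p(\lambda)=U_\lambda\cup L_\lambda$, and $a^*_\lambda=\#\mathrm{Rim}^*_p(\lambda)$. *)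

(* Defs.v *)
From mathcomp Require Import all_boot.
Set Implicit Arguments. Unset Strict Implicit. Unset Printing Implicit Defensive.

Definition is_partition (la : seq nat) : bool :=
  sorted geq la && all (fun x => 0 < x) la.

(* lambda_i, 1-indexed rows; 0 beyond the last part. *)
Definition part (la : seq nat) (i : nat) : nat := nth 0 la i.-1.

Definition in_diag (la : seq nat) (i j : nat) : bool :=
  [&& 0 < i, 0 < j & j <= part la i].

Definition self_conjugate (la : seq nat) : Prop :=
  forall i j, in_diag la i j = in_diag la j i.

Definition diag_nodes (la : seq nat) : seq (nat * nat) :=
  flatten [seq [seq (i, j) | j <- rev (iota 1 (part la i))] | i <- iota 1 (size la)].

(* The rim: nodes (i,j) with (i+1,j+1) not in [lambda], listed in the rim-path
   order from (1,lambda_1) to (l(lambda),1): the path goes down row by row and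
   leftwards inside a row, so this is the order of diag_nodes. The label of a
   rim node is its (0-based) position in this list plus one. *)
Definition rim (la : seq nat) : seq (nat * nat) :=
  [seq x <- diag_nodes la | ~~ in_diag la x.1.+1 x.2.+1].

(* p-segments, on 0-based positions in the rim list r.  If its
   last node lies in the last row l, stop; otherwise the next segment starts
   at the smallest position whose node lies in the next row.  [fuel] bounds the
   number of segments (each segment is nonempty and starts strictly later). *)
Fixpoint prim_pos (p l : nat) (r : seq (nat * nat)) (fuel s : nat) : seq nat :=
  match fuel with
  | 0 => [::]
  | f.+1 =>
      let stop := minn (s + p) (size r) in
      let seg := iota s (stop - s) in
      let i := (nth (0, 0) r stop.-1).1 in
      if i == l then seg
      else seg ++ prim_pos p l r f (find (fun x : nat * nat => x.1 == i.+1) r)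
  end.

Definition p_rim (p : nat) (la : seq nat) : seq (nat * nat) :=
  let r := rim la in
  [seq nth (0, 0) r k | k <- prim_pos p (size la) r (size r).+1 0].

Definition U_set (p : nat) (la : seq nat) : seq (nat * nat) :=
  [seq x <- p_rim p la | x.1 <= x.2].

Definition L_set (p : nat) (la : seq nat) : seq (nat * nat) :=
  [seq (x.2, x.1) | x <- U_set p la].

Definition rim_star (p : nat) (la : seq nat) : seq (nat * nat) :=
  undup (U_set p la ++ L_set p la).

Definition a_star (p : nat) (la : seq nat) : nat := size (rim_star p la).

(* Main.v *)
Require Import Defs.
From mathcomp Require Import all_boot zify.
Set Implicit Arguments. Unset Strict Implicit.

Definition lexR : rel (nat * nat) :=
  fun x y => (x.1 < y.1) || ((x.1 == y.1) && (y.2 < x.2)).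

Lemma part_mono la : sorted geq la -> forall i j, 0 < i -> i <= j -> part la j <= part la i.
Proof.
move=> hs i j hi hij; rewrite /part.
case: (ltnP j.-1 (size la)) => hj; last by rewrite nth_default.
have tr : transitive geq by move=> a b c /= h1 h2; exact: leq_trans h2 h1.
have := @sorted_leq_nth _ geq tr (fun a => leqnn a) 0 la hs i.-1 j.-1.
rewrite !inE /=; apply => //; lia.
Qed.

Lemma mem_diag la x : x \in diag_nodes la -> in_diag la x.1 x.2.
Proof.
case/flatten_mapP => i; rewrite mem_iota => /andP[hi _].
case/mapP => j; rewrite mem_rev mem_iota => /andP[hj1 hj2] -> /=.
rewrite /in_diag hi hj1 /=; lia.
Qed.

Lemma pw_rows la m n :
  pairwise lexR (flatten [seq [seq (i, j) | j <- rev (iota 1 (part la i))] | i <- iota m n]).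
Proof.
elim: n m => [|n IH] m //=.
rewrite pairwise_cat IH andbT; apply/andP; split.
  apply/allrelP => x y /mapP[j _ ->] /flatten_mapP[i]; rewrite mem_iota => /andP[hi _].
  case/mapP => k _ -> /=; rewrite /lexR /= hi //.
rewrite pairwise_map.
have : sorted (fun a b => b < a) (rev (iota 1 (part la m))).
  by rewrite rev_sorted; exact: iota_ltn_sorted.
rewrite sorted_pairwise; last by move=> a b c /= h1 h2; lia.
apply: sub_pairwise => a b /= h; rewrite /lexR /= eqxx h; lia.
Qed.

Lemma pw_diag la : pairwise lexR (diag_nodes la).
Proof. exact: pw_rows. Qed.

Definition keyR : rel (nat * nat) := fun x y => (x.1 <= y.1) && (x.1 + y.2 < y.1 + x.2).

Lemma pw_rim la : sorted geq la -> pairwise keyR (rim la).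
Proof.
move=> hs.
have hall : all (fun x => (x \in diag_nodes la) && ~~ in_diag la x.1.+1 x.2.+1) (rim la).
  by apply/allP => x; rewrite mem_filter andbC.
apply: (sub_in_pairwise (P := fun x => (x \in diag_nodes la) && ~~ in_diag la x.1.+1 x.2.+1)) hall _; last first.
  exact/pairwise_filter/pw_diag.
move=> [a b] [c d] /andP[_ hx] /andP[hy _]; rewrite /lexR /keyR /=.
have := mem_diag hy; rewrite /in_diag /= => /and3P[hy1 hy2 hy3].
case/orP => [hlt | /andP[/eqP he hl]]; last by rewrite he; lia.
apply/andP; split; first lia.
have hm := part_mono hs (i := a.+1) (j := c) isT hlt.
move: hx; rewrite /in_diag /=.
rewrite -leqNgt; lia.
Qed.

Section PP.
Variables (p l : nat) (r : seq (nat * nat)).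
Hypothesis hrow : pairwise (fun x y : nat * nat => x.1 <= y.1) r.

Lemma find_ge stop : stop <= size r ->
  stop <= find (fun x : nat * nat => x.1 == (nth (0, 0) r stop.-1).1.+1) r.
Proof.
case: stop => [//|st] hst /=.
rewrite leqNgt; apply/negP => hf.
set a := (fun x : nat * nat => _) in hf.
have hh : has a r by rewrite has_find; lia.
have := nth_find (0, 0) hh; rewrite /a => /eqP he.
have hle : (nth (0,0) r (find a r)).1 <= (nth (0,0) r st).1.
  case: (ltngtP (find a r) st) => h; last by rewrite h.
  - by apply: (pairwiseP (0,0) hrow) => //; rewrite inE /=; lia.
  - lia.
by move: hle; rewrite -/a he ltnn.
Qed.

Lemma L1 fuel s : all (fun k => s <= k < size r) (prim_pos p l r fuel s)
                  && uniq (prim_pos p l r fuel s).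
Proof.
elim: fuel s => [|f IH] s //=.
set stop := minn (s + p) (size r).
have hst : stop <= size r by rewrite /stop geq_minr.
have hseg : all (fun k => s <= k < size r) (iota s (stop - s)).
  apply/allP => k; rewrite mem_iota => /andP[h1 h2]; rewrite h1 /=; lia.
case: ifP => _; first by rewrite hseg iota_uniq.
set s' := find _ r.
have hs' : stop <= s' by exact: find_ge.
have /andP[ha hu] := IH s'.
rewrite all_cat cat_uniq hseg hu iota_uniq /= andbT; apply/andP; split.
  apply/allP => k /(allP ha) /andP[h1 h2]; apply/andP; split => //; lia.
apply/hasPn => k /(allP ha) /andP[h1 h2]; rewrite mem_iota; lia.
Qed.

Lemma L2 t fuel s : t < size r -> s <= t -> t \notin prim_pos p l r fuel s ->
  p %| count (fun k => k < t) (prim_pos p l r fuel s).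
Proof.
move=> ht; elim: fuel s => [|f IH] s hs //=.
set stop := minn (s + p) (size r).
have hst : stop <= size r by rewrite /stop geq_minr.
have hcnt : t \notin iota s (stop - s) -> count (fun k => k < t) (iota s (stop - s)) = p.
  rewrite mem_iota => hn.
  have e : stop = s + p by rewrite /stop; lia.
  rewrite (eq_in_count (a2 := predT)); first by rewrite count_predT size_iota; lia.
  by move=> k; rewrite mem_iota /=; lia.
case: ifP => _; first by move=> hn; rewrite hcnt.
rewrite mem_cat negb_or => /andP[hn1 hn2].
rewrite count_cat hcnt // dvdn_addl //.
set s' := find _ r in hn2 *.
case: (leqP s' t) => hs't; first exact: IH.
have /andP[ha _] := L1 f s'.
rewrite (eq_in_count (a2 := pred0)) ?count_pred0 //.
by move=> k /(allP ha) /=; lia.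
Qed.
End PP.

Lemma durfee la : is_partition la -> la != [::] ->
  exists d, [/\ 0 < d, d <= size la, d <= part la d & ~~ in_diag la d.+1 d.+1].
Proof.
case/andP => hs hpos hne.
pose P := fun i => (0 < i) && (i <= part la i).
have exP : exists i, P i.
  exists 1; rewrite /P /part /=; move: hpos hne; clear; case: la => //= a s /andP[ha _] _; lia.
have ubP : forall i, P i -> i <= size la.
  move=> i /andP[h1 h2]; rewrite leqNgt; apply/negP => hi.
  by move: h2; rewrite /part nth_default; lia.
case: (ex_maxnP exP ubP) => d /andP[h1 h2] hmax.
exists d; split => //; first by apply: ubP; rewrite /P h1.
apply/negP => /and3P[_ _ hd].
have := hmax d.+1; rewrite /P hd /=; lia.
Qed.

Theorem lemma3p10 (p : nat) (la : seq nat) :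
  prime p -> odd p ->
  is_partition la -> la != [::] -> self_conjugate la ->
  ~~ odd (a_star p la) -> p %| a_star p la.
Proof.
move=> hp _ hpart hne _.
have hs : sorted geq la by case/andP: hpart.
have [d [hd0 hdl hdd hdn]] := durfee hpart hne.
set r := rim la.
have hkey : pairwise keyR r := pw_rim hs.
have hrow : pairwise (fun x y : nat * nat => x.1 <= y.1) r.
  by apply: sub_pairwise hkey => x y /andP[].
have hru : uniq r.
  by apply: pairwise_uniq hkey => x; rewrite /keyR ltnn andbF.
have hdr : (d, d) \in r.
  rewrite mem_filter /= hdn /=; apply/flatten_mapP; exists d.
    by rewrite mem_iota; lia.
  by apply/mapP; exists d => //; rewrite mem_rev mem_iota; lia.
set N := size r.
set t := index (d, d) r.
have htN : t < N by rewrite index_mem.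
set f := nth (0, 0) r.
have hft : f t = (d, d) by rewrite /f nth_index.
have sgn1 : forall k, k < N -> k < t -> (f k).1 < (f k).2.
  move=> k hk hkt; have := (pairwiseP (0,0) hkey) k t hk htN hkt.
  by rewrite -/f hft /keyR /=; lia.
have sgn2 : forall k, k < N -> t < k -> (f k).2 < (f k).1.
  move=> k hk hkt; have := (pairwiseP (0,0) hkey) t k htN hk hkt.
  by rewrite -/f hft /keyR /=; lia.
have finj : {in gtn N &, injective f}.
  move=> i j hi hj /eqP; rewrite /f nth_uniq //; first by move/eqP.
set P := prim_pos p (size la) r N.+1 0.
have /andP[hPa hPu] := L1 p (size la) hrow N.+1 0.
rewrite -/P in hPa hPu.
have hPN : forall k, k \in P -> k < N by move=> k /(allP hPa) /andP[].
set Pa := [seq k <- P | k < t].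
set Pd := [seq k <- P | k == t].
have hU : U_set p la = map f [seq k <- P | k <= t].
  rewrite /U_set /p_rim -/r -/N -/P -/f filter_map; congr map.
  apply: eq_in_filter => k /hPN hk /=.
  case: (ltngtP k t) => h.
  - by have := sgn1 k hk h; lia.
  - by have := sgn2 k hk h; lia.
  - by rewrite h hft leqnn.
have hQ : [seq k <- P | k <= t] =i Pa ++ Pd.
  by move=> k; rewrite mem_cat !mem_filter; case: (ltngtP k t) => h /=; rewrite ?andbF ?andbT ?orbF.
set sw := (fun x : nat * nat => (x.2, x.1)).
have hsw : map sw (map f Pd) = map f Pd.
  rewrite -map_comp; apply/eq_in_map => k; rewrite mem_filter => /andP[/eqP -> _] /=.
  by rewrite /sw hft.
set T := map f Pa ++ map sw (map f Pa) ++ map f Pd.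
have hUm : forall x, (x \in U_set p la) = (x \in map f Pa) || (x \in map f Pd).
  by move=> x; rewrite hU (eq_mem_map f hQ x) map_cat mem_cat.
have hLm : forall x, (x \in L_set p la) = (x \in map sw (map f Pa)) || (x \in map f Pd).
  move=> x; rewrite /L_set hU -/sw (eq_mem_map sw (eq_mem_map f hQ) x).
  by rewrite map_cat map_cat hsw mem_cat.
have hmem : undup (U_set p la ++ L_set p la) =i T.
  move=> x; rewrite mem_undup mem_cat hUm hLm /T !mem_cat.
  by case: (x \in map f Pa); case: (x \in map sw (map f Pa)); case: (x \in map f Pd).
have hPau : uniq Pa by apply: filter_uniq.
have hPdu : uniq Pd by apply: filter_uniq.
have injPa : {in Pa &, injective f}.
  move=> i j; rewrite !mem_filter => /andP[_ /hPN hi] /andP[_ /hPN hj]; exact: finj.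
have injPd : {in Pd &, injective f}.
  move=> i j; rewrite !mem_filter => /andP[_ /hPN hi] /andP[_ /hPN hj]; exact: finj.
have swinj : injective sw by move=> [a b] [c e] [-> ->].
have hTu : uniq T.
  rewrite /T !cat_uniq (map_inj_uniq swinj) (map_inj_in_uniq injPa) (map_inj_in_uniq injPd) hPau hPdu /=.
  apply/andP; split.
  - apply/hasPn => x; rewrite mem_cat => /orP[].
      case/mapP => y /mapP[k]; rewrite mem_filter => /andP[hk /hPN hkN] hy hx.
      apply/negP => /mapP[j]; rewrite mem_filter => /andP[hj /hPN hjN] hxj.
      have := sgn1 k hkN hk; have := sgn1 j hjN hj; move: hxj; rewrite hx hy /sw.
      by case: (f j) => a b; case: (f k) => a' b' /= [h2 h3] h4 h5; clear -h2 h3 h4 h5; lia.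
    case/mapP => k; rewrite mem_filter => /andP[/eqP -> _] ->.
    apply/negP => /mapP[j]; rewrite mem_filter => /andP[hj /hPN hjN].
    by rewrite hft; have := sgn1 j hjN hj; case: (f j) => a b /= h1 [h2 h3]; clear -h1 h2 h3; lia.
  - rewrite andbT; apply/hasPn => x /mapP[k]; rewrite mem_filter => /andP[/eqP -> _] ->.
    apply/negP => /mapP[y] /mapP[j]; rewrite mem_filter => /andP[hj /hPN hjN] -> .
    by rewrite hft /sw; have := sgn1 j hjN hj; case: (f j) => a b /= h1 [h2 h3]; clear -h1 h2 h3; lia.
have hsize : a_star p la = (size Pa).*2 + (t \in P).
  rewrite /a_star /rim_star.
  have := uniq_size_uniq hTu (fun x => esym (hmem x)); rewrite undup_uniq => /esym/eqP ->.
  rewrite /T !size_cat !size_map -addnn addnA; congr (_ + _).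
  by rewrite size_filter -(count_uniq_mem t hPu).
rewrite hsize => hev.
have htP : t \notin P by apply/negP => h; move: hev; rewrite h oddD odd_double.
have := L2 (p:=p) (l:=size la) hrow htN (leq0n t) htP; rewrite -/P -size_filter -/Pa.
rewrite (negbTE htP) addn0 -muln2 => h.
exact: dvdn_mulr.
Qed.
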